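(* Let $T$ be a complete affine $L$-theory and $M\models T$. Then every extreme type $p\in E_n(T)$ is the limit, in the logic topology, of types of tuples realized in $M$.
   Context: Affine continuous logic: structures are complete metric spaces of diameter $\le1$ with Lipschitz interpretations; affine formulas built from atomic $1,d(t_1,t_2),R(\bar t)$ by $+$, real scalars, $\sup$, $\inf$. $\mathbb D_n(T)$: affine formulas in $n$ free variables modulo $T$-equivalence, ordered by $0\le\phi$ iff $T\models 0\le\inf_{\bar x}\phi$. An $n$-type is a positive linear functional $p$ on $\mathbb D_n(T)$ with $p(1)=1$; $K_n(T)$ is the set of $n$-types with the logic topology (weak* topology: $p_k\to p$ iff $p_k(\phi)\to p(\phi)$ for all $\phi$); $E_n(T)$ is its set of extreme points. The type of $\bar a\in M^n$ is $tp(\bar a)(\phi)=\phi^M(\bar a)$. *)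

(* Defs.v *)
From Stdlib Require Fin Compare_dec.
From Stdlib Require Import Reals Lra List.
From Coquelicot Require Import Coquelicot.
Open Scope R_scope.
Set Implicit Arguments.

Record Language := {
  fsym : Type;
  farity : fsym -> nat;
  flip : fsym -> R;
  rsym : Type;
  rarity : rsym -> nat;
  rlip : rsym -> R
}.

(** * Terms and affine formulas (de Bruijn variables; sup/inf bind variable 0) *)
Inductive term (L : Language) : Type :=
| TVar : nat -> term L
| TApp : forall f : fsym L, (Fin.t (farity L f) -> term L) -> term L.

Inductive formula (L : Language) : Type :=
| F_one : formula L
| F_dist : term L -> term L -> formula L
| F_rel : forall r : rsym L, (Fin.t (rarity L r) -> term L) -> formula L
| F_add : formula L -> formula L -> formula L
| F_scale : R -> formula L -> formula L
| F_sup : formula L -> formula L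
| F_inf : formula L -> formula L.

Arguments TVar {L}.
Arguments F_one {L}.

Fixpoint term_wf {L} (n : nat) (t : term L) : Prop :=
  match t with
  | TVar i => (i < n)%nat
  | TApp f args => forall j, term_wf n (args j)
  end.

Fixpoint formula_wf {L} (n : nat) (phi : formula L) : Prop :=
  match phi with
  | F_one => True
  | F_dist t1 t2 => term_wf n t1 /\ term_wf n t2
  | F_rel r args => forall j, term_wf n (args j)
  | F_add phi psi => formula_wf n phi /\ formula_wf n psi
  | F_scale _ phi => formula_wf n phi
  | F_sup phi => formula_wf (S n) phi
  | F_inf phi => formula_wf (S n) phi
  end.

Record Structure (L : Language) := {
  carrier :> Type;
  dist : carrier -> carrier -> R;
  point : carrier;
  dist_refl : forall x, dist x x = 0;
  dist_sep : forall x y, dist x y = 0 -> x = y;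
  dist_sym : forall x y, dist x y = dist y x;
  dist_tri : forall x y z, dist x z <= dist x y + dist y z;
  dist_diam : forall x y, dist x y <= 1;
  dist_complete : forall u : nat -> carrier,
    (forall eps, 0 < eps -> exists N, forall m k, (N <= m)%nat -> (N <= k)%nat ->
        dist (u m) (u k) < eps) ->
    exists x, forall eps, 0 < eps -> exists N, forall k, (N <= k)%nat -> dist (u k) x < eps;
  finterp : forall f : fsym L, (Fin.t (farity L f) -> carrier) -> carrier;
  finterp_lip : forall f a b delta, 0 <= delta ->
    (forall i, dist (a i) (b i) <= delta) ->
    dist (finterp f a) (finterp f b) <= flip L f * delta;
  rinterp : forall r : rsym L, (Fin.t (rarity L r) -> carrier) -> R;
  rinterp_lip : forall r a b delta, 0 <= delta ->
    (forall i, dist (a i) (b i) <= delta) ->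
    Rabs (rinterp r a - rinterp r b) <= rlip L r * delta
}.

Arguments dist {L s}.
Arguments finterp {L s}.
Arguments rinterp {L s}.
Arguments point {L} s.

Definition scons {A : Type} (x : A) (a : nat -> A) : nat -> A :=
  fun i => match i with O => x | S k => a k end.

Fixpoint teval {L} (M : Structure L) (t : term L) (a : nat -> M) : M :=
  match t with
  | TVar i => a i
  | TApp f args => finterp f (fun j => teval M (args j) a)
  end.

Fixpoint eval {L} (M : Structure L) (phi : formula L) (a : nat -> M) : R :=
  match phi with
  | F_one => 1
  | F_dist t1 t2 => dist (teval M t1 a) (teval M t2 a)
  | F_rel r args => rinterp r (fun j => teval M (args j) a)
  | F_add phi psi => eval M phi a + eval M psi a
  | F_scale c phi => c * eval M phi a
  | F_sup phi => real (Lub_Rbar (fun v => exists x : M, v = eval M phi (scons x a)))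
  | F_inf phi => real (Glb_Rbar (fun v => exists x : M, v = eval M phi (scons x a)))
  end.

Definition Theory (L : Language) := formula L -> Prop.

Definition models {L} (M : Structure L) (T : Theory L) : Prop :=
  forall phi, T phi -> forall a : nat -> M, 0 <= eval M phi a.

Definition entails_nonneg {L} (T : Theory L) (phi : formula L) : Prop :=
  forall M : Structure L, models M T -> forall a : nat -> M, 0 <= eval M phi a.

Definition T_equiv {L} (T : Theory L) (phi psi : formula L) : Prop :=
  forall M : Structure L, models M T -> forall a : nat -> M, eval M phi a = eval M psi a.

Definition complete_theory {L} (T : Theory L) : Prop :=
  (exists M : Structure L, models M T) /\
  forall phi, formula_wf 0 phi ->
    forall (M N : Structure L) (a : nat -> M) (b : nat -> N),
      models M T -> models N T -> eval M phi a = eval N phi b.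

(** * n-types: positive linear functionals on D_n(T) with p(1) = 1,
      represented on representatives (formulas in n free variables). *)
Record is_type {L} (T : Theory L) (n : nat) (p : formula L -> R) : Prop := {
  type_resp : forall phi psi, formula_wf n phi -> formula_wf n psi ->
     T_equiv T phi psi -> p phi = p psi;
  type_add : forall phi psi, formula_wf n phi -> formula_wf n psi ->
     p (F_add phi psi) = p phi + p psi;
  type_scale : forall c phi, formula_wf n phi -> p (F_scale c phi) = c * p phi;
  type_pos : forall phi, formula_wf n phi -> entails_nonneg T phi -> 0 <= p phi;
  type_one : p F_one = 1
}.

Definition type_eq {L} (n : nat) (p q : formula L -> R) : Prop :=
  forall phi, formula_wf n phi -> p phi = q phi.

Definition extreme_type {L} (T : Theory L) (n : nat) (p : formula L -> R) : Prop :=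
  is_type T n p /\
  forall (q1 q2 : formula L -> R) (lam : R),
    is_type T n q1 -> is_type T n q2 -> 0 < lam < 1 ->
    type_eq n p (fun phi => lam * q1 phi + (1 - lam) * q2 phi) ->
    type_eq n q1 q2.

Definition tuple_env {L} (M : Structure L) (n : nat) (a : Fin.t n -> M) : nat -> M :=
  fun i => match Compare_dec.lt_dec i n with
           | left h => a (Fin.of_nat_lt h)
           | right _ => point M
           end.

Definition tp {L} (M : Structure L) (n : nat) (a : Fin.t n -> M) : formula L -> R :=
  fun phi => eval M phi (tuple_env M a).

(** p lies in the closure, in the logic (weak-star) topology on K_n(T), of the
    set of types realized in M: every basic weak-star neighbourhood of p
    (given by finitely many formulas and eps > 0) contains some tp(a), a in M^n.
    Equivalently, p is the limit of a net of realized types. *)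
Definition limit_of_realized_types {L} (M : Structure L) (n : nat) (p : formula L -> R) : Prop :=
  forall (phis : list (formula L)) (eps : R),
    0 < eps -> List.Forall (formula_wf n) phis ->
    exists a : Fin.t n -> M,
      List.Forall (fun phi => Rabs (tp M a phi - p phi) < eps) phis.

(* Main.v *)
Require Import Defs.
From Stdlib Require Import Reals Lra List Classical ClassicalEpsilon FunctionalExtensionality PropExtensionality ZArith Lia.
From Coquelicot Require Import Coquelicot.
From mathcomp Require classical_sets.
Import Defs.
Open Scope R_scope.

Definition vadd {Y} (u v : Y -> R) : Y -> R := fun y => u y + v y.
Definition vsc {Y} (a : R) (u : Y -> R) : Y -> R := fun y => a * u y.
Definition vz {Y} : Y -> R := fun _ => 0.

Definition bo (P : Prop) : bool := if excluded_middle_informative P then true else false.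
Lemma boP (P : Prop) : bo P = true <-> P.
Proof. unfold bo; destruct (excluded_middle_informative P); split; intros; auto; discriminate. Qed.

Section HB.
Variable Y : Type.
Variables (W D : (Y -> R) -> Prop) (S f : (Y -> R) -> R).
Hypothesis W_add : forall u v, W u -> W v -> W (vadd u v).
Hypothesis W_sc : forall a u, W u -> W (vsc a u).
Hypothesis D_add : forall u v, D u -> D v -> D (vadd u v).
Hypothesis D_sc : forall a u, D u -> D (vsc a u).
Hypothesis D_W : forall u, D u -> W u.
Hypothesis D_z : D vz.
Hypothesis S_add : forall u v, W u -> W v -> S (vadd u v) <= S u + S v.
Hypothesis S_sc : forall a u, W u -> 0 < a -> S (vsc a u) = a * S u.
Hypothesis f_add : forall u v, D u -> D v -> f (vadd u v) = f u + f v.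
Hypothesis f_sc : forall a u, D u -> f (vsc a u) = a * f u.
Hypothesis f_le : forall u, D u -> f u <= S u.

Definition good (G : (Y -> R) -> Prop) (h : (Y -> R) -> R) : Prop :=
  (forall u, D u -> G u) /\ (forall u, G u -> W u) /\
  (forall u v, G u -> G v -> G (vadd u v)) /\ (forall a u, G u -> G (vsc a u)) /\
  (forall u v, G u -> G v -> h (vadd u v) = h u + h v) /\
  (forall a u, G u -> h (vsc a u) = a * h u) /\
  (forall u, D u -> h u = f u) /\ (forall u, G u -> h u <= S u).

Record PE := { pG : (Y -> R) -> Prop; ph : (Y -> R) -> R; pgood : good pG ph }.

Definition le_pe (t1 t2 : PE) : Prop :=
  (forall u, pG t1 u -> pG t2 u) /\ (forall u, pG t1 u -> ph t2 u = ph t1 u).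

Lemma t0_good : good D f.
Proof. repeat split; auto. Qed.

Lemma vsc0 (u : Y -> R) : vsc 0 u = vz.
Proof. apply functional_extensionality; intro; unfold vsc, vz; ring. Qed.

Lemma f_z : f vz = 0.
Proof. rewrite <- (vsc0 vz), f_sc; auto; ring. Qed.

Lemma chain_ub (A : PE -> Prop) :
  (forall s t, A s -> A t -> le_pe s t \/ le_pe t s) ->
  (exists t1, A t1) ->
  exists t, forall s, A s -> le_pe s t.
Proof.
  intros tot [t1 At1].
  set (G := fun u => exists t, A t /\ pG t u).
  set (h := fun u => match excluded_middle_informative (exists t, A t /\ pG t u) with
                     | left H => ph (proj1_sig (constructive_indefinite_description _ H)) u
                     | right _ => 0 end).
  assert (hval : forall t u, A t -> pG t u -> h u = ph t u).
  { intros t u At Gu. unfold h. destruct (excluded_middle_informative _) as [H|H].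
    - destruct (constructive_indefinite_description _ H) as [t' [At' Gt']]; simpl.
      destruct (tot t t' At At') as [[_ E]|[_ E]]; auto. symmetry; auto.
    - exfalso; eauto. }
  assert (join : forall t t' u v, A t -> A t' -> pG t u -> pG t' v ->
                  exists s, A s /\ pG s u /\ pG s v).
  { intros t t' u v At At' Gu Gv. destruct (tot t t' At At') as [[E _]|[E _]].
    - exists t'; auto.
    - exists t; auto. }
  assert (gd : good G h).
  { destruct (pgood t1) as [g1 _].
    repeat split.
    - intros u Du; exists t1; split; auto.
    - intros u [t [At Gu]]; destruct (pgood t) as [_ [g2 _]]; auto.
    - intros u v [t [At Gu]] [t' [At' Gv]].
      destruct (join t t' u v At At' Gu Gv) as [s [As [Gu' Gv']]].
      exists s; split; auto. destruct (pgood s) as [_ [_ [g3 _]]]; auto.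
    - intros a u [t [At Gu]]. exists t; split; auto. destruct (pgood t) as [_ [_ [_ [g4 _]]]]; auto.
    - intros u v [t [At Gu]] [t' [At' Gv]].
      destruct (join t t' u v At At' Gu Gv) as [s [As [Gu' Gv']]].
      destruct (pgood s) as [_ [_ [g3 [_ [g5 _]]]]].
      rewrite (hval s u), (hval s v), (hval s); auto.
    - intros a u [t [At Gu]]. destruct (pgood t) as [_ [_ [_ [g4 [_ [g6 _]]]]]].
      rewrite (hval t u), (hval t); auto.
    - intros u Du. destruct (pgood t1) as [g1' [_ [_ [_ [_ [_ [g7 _]]]]]]].
      rewrite (hval t1 u); auto.
    - intros u [t [At Gu]]. destruct (pgood t) as [_ [_ [_ [_ [_ [_ [_ g8]]]]]]].
      rewrite (hval t u); auto. }
  exists (Build_PE G h gd). intros s As. split; simpl.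
  - intros u Gu; exists s; auto.
  - intros u Gu; apply hval; auto.
Qed.

Lemma ext_step (t : PE) (x0 : Y -> R) : W x0 -> ~ pG t x0 ->
  exists t', le_pe t t' /\ pG t' x0.
Proof.
  intros Wx0 nG.
  destruct (pgood t) as [gD [gW [gadd [gsc [hadd [hsc [hD hS]]]]]]].
  set (G := pG t) in *. set (h := ph t) in *.
  assert (Gz : G vz) by auto.
  assert (hz : h vz = 0) by (rewrite hD; auto; apply f_z).
  set (E := fun r => exists y, G y /\ r = h y - S (vadd y (vsc (-1) x0))).
  assert (key : forall y z, G y -> G z -> h y - S (vadd y (vsc (-1) x0)) <= S (vadd z x0) - h z).
  { intros y z Gy Gz'.
    assert (h y + h z <= S (vadd y (vsc (-1) x0)) + S (vadd z x0)).
    { rewrite <- hadd; auto.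
      replace (vadd y z) with (vadd (vadd y (vsc (-1) x0)) (vadd z x0)).
      - apply Rle_trans with (S (vadd y z)).
        + replace (vadd (vadd y (vsc (-1) x0)) (vadd z x0)) with (vadd y z). apply hS; auto.
          apply functional_extensionality; intro; unfold vadd, vsc; ring.
        + replace (vadd y z) with (vadd (vadd y (vsc (-1) x0)) (vadd z x0)).
          apply S_add; auto.
          apply functional_extensionality; intro; unfold vadd, vsc; ring.
      - apply functional_extensionality; intro; unfold vadd, vsc; ring. }
    lra. }
  destruct (completeness E) as [c [cub club]].
  { exists (S (vadd vz x0) - h vz). intros r [y [Gy ->]]. apply key; auto. }
  { exists (h vz - S (vadd vz (vsc (-1) x0))). exists vz; auto. }
  assert (c1 : forall y, G y -> h y - S (vadd y (vsc (-1) x0)) <= c).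
  { intros y Gy; apply cub; exists y; auto. }
  assert (c2 : forall z, G z -> c <= S (vadd z x0) - h z).
  { intros z Gz'; apply club; intros r [y [Gy ->]]; apply key; auto. }
  assert (uniq : forall y1 y2 a1 a2, G y1 -> G y2 ->
            vadd y1 (vsc a1 x0) = vadd y2 (vsc a2 x0) -> y1 = y2 /\ a1 = a2).
  { intros y1 y2 a1 a2 G1 G2 Heq.
    destruct (Req_dec a1 a2) as [Ea|Ea].
    - subst a2. split; auto. apply functional_extensionality; intro p.
      apply (f_equal (fun F => F p)) in Heq. unfold vadd, vsc in Heq. lra.
    - exfalso. apply nG.
      replace x0 with (vsc (/ (a1 - a2)) (vadd y2 (vsc (-1) y1))).
      + apply gsc, gadd; auto.
      + apply functional_extensionality; intro p.
        apply (f_equal (fun F => F p)) in Heq. unfold vadd, vsc in *.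
        assert (a1 - a2 <> 0) by lra.
        apply (Rmult_eq_reg_l (a1 - a2)); auto. field_simplify; auto. lra. }
  set (G' := fun u => exists y a, G y /\ u = vadd y (vsc a x0)).
  set (h' := fun u => match excluded_middle_informative
                        (exists ya : (Y -> R) * R, G (fst ya) /\ u = vadd (fst ya) (vsc (snd ya) x0)) with
                      | left H => let ya := proj1_sig (constructive_indefinite_description _ H) in
                                  h (fst ya) + snd ya * c
                      | right _ => 0 end).
  assert (hval : forall y a, G y -> h' (vadd y (vsc a x0)) = h y + a * c).
  { intros y a Gy. unfold h'. destruct (excluded_middle_informative _) as [H|H].
    - destruct (constructive_indefinite_description _ H) as [[y' a'] [Gy' Eq]]; simpl in *.
      destruct (uniq y y' a a' Gy Gy' Eq); subst; auto.
    - exfalso; apply H; exists (y, a); simpl; auto. }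
  assert (r0 : forall y, vadd y (vsc 0 x0) = y).
  { intro y; apply functional_extensionality; intro; unfold vadd, vsc; ring. }
  assert (gd : good G' h').
  { repeat split.
    - intros u Du; exists u, 0; split; auto; try (rewrite r0; auto).
    - intros u [y [a [Gy ->]]]. apply W_add; auto.
    - intros u v [y [a [Gy ->]]] [y' [a' [Gy' ->]]]. exists (vadd y y'), (a + a'); split; auto.
      apply functional_extensionality; intro; unfold vadd, vsc; ring.
    - intros b u [y [a [Gy ->]]]. exists (vsc b y), (b * a); split; auto.
      apply functional_extensionality; intro; unfold vadd, vsc; ring.
    - intros u v [y [a [Gy ->]]] [y' [a' [Gy' ->]]].
      replace (vadd (vadd y (vsc a x0)) (vadd y' (vsc a' x0))) with (vadd (vadd y y') (vsc (a + a') x0)).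
      + rewrite !hval, hadd; auto. ring.
      + apply functional_extensionality; intro; unfold vadd, vsc; ring.
    - intros b u [y [a [Gy ->]]].
      replace (vsc b (vadd y (vsc a x0))) with (vadd (vsc b y) (vsc (b * a) x0)).
      + rewrite !hval, hsc; auto. ring.
      + apply functional_extensionality; intro; unfold vadd, vsc; ring.
    - intros u Du. replace (h' u) with (h' (vadd u (vsc 0 x0))) by (rewrite r0; auto). rewrite hval, Rmult_0_l, Rplus_0_r; auto.
    - intros u [y [a [Gy ->]]]. rewrite hval; auto.
      destruct (Rlt_dec 0 a) as [Ha|Ha].
      + set (z := vsc (/ a) y). assert (Gz' : G z) by (apply gsc; auto).
        specialize (c2 z Gz').
        replace (vadd y (vsc a x0)) with (vsc a (vadd z x0)).
        * rewrite S_sc; auto.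
          replace y with (vsc a z) at 1.
          -- rewrite hsc; auto. apply Rmult_le_compat_l with (r := a) in c2; lra.
          -- apply functional_extensionality; intro; unfold z, vsc; field; lra.
        * apply functional_extensionality; intro; unfold z, vadd, vsc; field; lra.
      + destruct (Req_dec a 0) as [Ha0|Ha0].
        * subst a. rewrite r0. rewrite Rmult_0_l, Rplus_0_r; auto.
        * set (b := - a). assert (Hb : 0 < b) by (unfold b; lra).
          set (z := vsc (/ b) y). assert (Gz' : G z) by (apply gsc; auto).
          specialize (c1 z Gz').
          replace (vadd y (vsc a x0)) with (vsc b (vadd z (vsc (-1) x0))).
          -- rewrite S_sc; auto.
             replace y with (vsc b z) at 1.
             ++ rewrite hsc; auto. apply Rmult_le_compat_l with (r := b) in c1; [|lra].
                unfold b in *. lra.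
             ++ apply functional_extensionality; intro; unfold z, vsc; field; lra.
          -- apply functional_extensionality; intro; unfold z, b, vadd, vsc; field; lra. }
  exists (Build_PE G' h' gd). split; [split|]; simpl.
  - intros u Gu. exists u, 0; split; auto; try (rewrite r0; auto).
  - intros u Gu. replace (h' u) with (h' (vadd u (vsc 0 x0))) by (rewrite r0; auto).
    rewrite hval; [unfold h; ring | exact Gu].
  - exists vz, 1; split; auto. apply functional_extensionality; intro; unfold vadd, vsc, vz; ring.
Qed.

Theorem hahn_banach : exists g : (Y -> R) -> R,
  (forall u v, W u -> W v -> g (vadd u v) = g u + g v) /\
  (forall a u, W u -> g (vsc a u) = a * g u) /\
  (forall u, D u -> g u = f u) /\ (forall u, W u -> g u <= S u).
Proof.
  set (t0 := Build_PE D f t0_good).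
  destruct (@classical_sets.ZL_preorder PE t0 (fun a b => bo (le_pe a b))) as [t tmax].
  - intro t; apply (proj2 (boP _)); split; auto.
  - intros r s t H1 H2; apply (proj2 (boP _)).
    destruct (proj1 (boP (le_pe r s)) H1) as [A1 B1], (proj1 (boP (le_pe s t)) H2) as [A2 B2]; split; auto.
    intros u Gu; rewrite B2, B1; auto.

  - intros A tot. destruct (classic (exists t1, A t1)) as [Hne|Hne].
    + destruct (chain_ub A) as [t Ht]; auto.
      * intros s t As At. destruct (tot s t As At) as [H|H].
        -- left; exact (proj1 (boP (le_pe s t)) H).
        -- right; exact (proj1 (boP (le_pe t s)) H).
      * exists t; intros s As; apply (proj2 (boP _)); auto.
    + exists t0; intros s As; exfalso; eauto.
  - assert (all : forall x0, W x0 -> pG t x0).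
    { intros x0 Wx0. apply NNPP; intro nG.
      destruct (ext_step t x0 Wx0 nG) as [t' [Le Gx]].
      specialize (tmax t'). assert (H : bo (le_pe t t') = true) by (apply boP; auto).
      specialize (tmax H). destruct (proj1 (boP (le_pe t' t)) tmax) as [L _]; auto. }
    destruct (pgood t) as [gD [gW [gadd [gsc [hadd [hsc [hD hS]]]]]]].
    exists (ph t); repeat split; auto.
Qed.
End HB.


Lemma lub_char (E : R -> Prop) (B v0 : R) :
  (forall v, E v -> v <= B) -> E v0 ->
  (forall v, E v -> v <= real (Lub_Rbar E)) /\
  (forall c, (forall v, E v -> v <= c) -> real (Lub_Rbar E) <= c).
Proof.
  intros HB H0. destruct (Lub_Rbar_correct E) as [ub lub].
  assert (HBr : is_ub_Rbar E (Finite B)) by (intros x Ex; simpl; auto).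
  destruct (Lub_Rbar E) as [l| |] eqn:El.
  - simpl. split.
    + intros v Ev; specialize (ub v Ev); simpl in ub; auto.
    + intros c Hc. assert (H : is_ub_Rbar E (Finite c)) by (intros x Ex; simpl; auto).
      specialize (lub _ H); simpl in lub; auto.
  - specialize (lub _ HBr); simpl in lub; contradiction.
  - specialize (ub v0 H0); simpl in ub; contradiction.
Qed.

Lemma glb_char (E : R -> Prop) (B v0 : R) :
  (forall v, E v -> B <= v) -> E v0 ->
  (forall v, E v -> real (Glb_Rbar E) <= v) /\
  (forall c, (forall v, E v -> c <= v) -> c <= real (Glb_Rbar E)).
Proof.
  intros HB H0. destruct (Glb_Rbar_correct E) as [lb glb].
  assert (HBr : is_lb_Rbar E (Finite B)) by (intros x Ex; simpl; auto).
  destruct (Glb_Rbar E) as [l| |] eqn:El.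
  - simpl. split.
    + intros v Ev; specialize (lb v Ev); simpl in lb; auto.
    + intros c Hc. assert (H : is_lb_Rbar E (Finite c)) by (intros x Ex; simpl; auto).
      specialize (glb _ H); simpl in glb; auto.
  - specialize (lb v0 H0); simpl in lb; contradiction.
  - specialize (glb _ HBr); simpl in glb; contradiction.
Qed.

Lemma dist_nonneg {L} (N : Structure L) (x y : N) : 0 <= dist x y.
Proof.
  pose proof (dist_tri N x y x). rewrite dist_refl, (dist_sym N y x) in H. lra.
Qed.

Lemma eval_bound {L} (N : Structure L) (phi : formula L) :
  exists B, forall e, Rabs (eval N phi e) <= B.
Proof.
  induction phi as [| t1 t2 | r args | phi IH1 psi IH2 | c phi IH | phi IH | phi IH].
  - exists 1; intros; simpl; rewrite Rabs_R1; lra.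
  - exists 1; intros e; simpl. pose proof (dist_nonneg N (teval N t1 e) (teval N t2 e)).
    pose proof (dist_diam N (teval N t1 e) (teval N t2 e)).
    rewrite Rabs_right; lra.
  - exists (Rabs (rinterp r (fun _ => point N)) + Rabs (rlip L r)). intros e; simpl.
    pose proof (rinterp_lip N r (fun j => teval N (args j) e) (fun _ => point N) Rle_0_1
                  (fun i => dist_diam N _ _)).
    pose proof (Rabs_triang_inv (rinterp r (fun j => teval N (args j) e)) (rinterp r (fun _ => point N))).
    pose proof (Rle_abs (rlip L r)). lra.
  - destruct IH1 as [B1 H1], IH2 as [B2 H2]. exists (B1 + B2); intros e; simpl.
    eapply Rle_trans; [apply Rabs_triang|]. specialize (H1 e); specialize (H2 e); lra.
  - destruct IH as [B H]. exists (Rabs c * B); intros e; simpl. rewrite Rabs_mult.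
    apply Rmult_le_compat_l; auto. apply Rabs_pos.
  - destruct IH as [B H]. exists B; intros e; simpl.
    set (E := fun v => exists x : N, v = eval N phi (scons x e)).
    assert (HB : forall v, E v -> v <= B).
    { intros v [x ->]. specialize (H (scons x e)). apply Rabs_le_between in H; lra. }
    assert (E0 : E (eval N phi (scons (point N) e))) by (exists (point N); auto).
    destruct (lub_char E B _ HB E0) as [U1 U2].
    apply Rabs_le. split.
    + specialize (U1 _ E0). specialize (H (scons (point N) e)). apply Rabs_le_between in H; lra.
    + apply U2; auto.
  - destruct IH as [B H]. exists B; intros e; simpl.
    set (E := fun v => exists x : N, v = eval N phi (scons x e)).
    assert (HB : forall v, E v -> - B <= v).
    { intros v [x ->]. specialize (H (scons x e)). apply Rabs_le_between in H; lra. }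
    assert (E0 : E (eval N phi (scons (point N) e))) by (exists (point N); auto).
    destruct (glb_char E (- B) _ HB E0) as [U1 U2].
    apply Rabs_le. split.
    + apply U2; auto.
    + specialize (U1 _ E0). specialize (H (scons (point N) e)). apply Rabs_le_between in H; lra.
Qed.

Lemma inf_le {L} (N : Structure L) phi e x :
  eval N (F_inf phi) e <= eval N phi (scons x e).
Proof.
  destruct (eval_bound N phi) as [B H]. simpl.
  set (E := fun v => exists x : N, v = eval N phi (scons x e)).
  assert (HB : forall v, E v -> - B <= v).
  { intros v [y ->]. specialize (H (scons y e)). apply Rabs_le_between in H; lra. }
  destruct (glb_char E (- B) _ HB (ex_intro _ x eq_refl)) as [U1 U2].
  apply U1; exists x; auto.
Qed.

Lemma inf_ge {L} (N : Structure L) phi e c :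
  (forall x, c <= eval N phi (scons x e)) -> c <= eval N (F_inf phi) e.
Proof.
  intros Hc. destruct (eval_bound N phi) as [B H]. simpl.
  set (E := fun v => exists x : N, v = eval N phi (scons x e)).
  assert (HB : forall v, E v -> - B <= v).
  { intros v [y ->]. specialize (H (scons y e)). apply Rabs_le_between in H; lra. }
  destruct (glb_char E (- B) _ HB (ex_intro _ (point N) eq_refl)) as [U1 U2].
  apply U2. intros v [y ->]; auto.
Qed.

Fixpoint iinf {L} (k : nat) (phi : formula L) : formula L :=
  match k with O => phi | S k => F_inf (iinf k phi) end.

Lemma iinf_wf {L} (k : nat) : forall m (phi : formula L), formula_wf (k + m) phi -> formula_wf m (iinf k phi).
Proof.
  induction k; intros m phi H; simpl; auto.
  apply IHk. rewrite Nat.add_succ_r; auto.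
Qed.

Lemma iinf_pos {L} (N : Structure L) k phi :
  (forall e, 0 <= eval N phi e) -> forall e, 0 <= eval N (iinf k phi) e.
Proof.
  induction k; intros H e; simpl; auto.
  apply inf_ge; intros x; apply IHk; auto.
Qed.

Lemma scons_eta {A} (e : nat -> A) : scons (e 0%nat) (fun i => e (S i)) = e.
Proof. apply functional_extensionality; intros [|i]; reflexivity. Qed.

Lemma iinf_pos_inv {L} (N : Structure L) k phi :
  (forall e, 0 <= eval N (iinf k phi) e) -> forall e, 0 <= eval N phi e.
Proof.
  induction k; intros H e; simpl in *; auto.
  apply IHk. intros e'. rewrite <- (scons_eta e').
  eapply Rle_trans; [apply H| apply inf_le].
Qed.

Lemma teval_agree {L} (N : Structure L) (t : term L) : forall n (e1 e2 : nat -> N),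
  term_wf n t -> (forall i, (i < n)%nat -> e1 i = e2 i) -> teval N t e1 = teval N t e2.
Proof.
  induction t as [i | f args IH]; intros n e1 e2 Hw Ha; simpl in *; auto.
  f_equal. apply functional_extensionality; intro j. eapply IH; eauto.
Qed.

Lemma eval_agree {L} (N : Structure L) (phi : formula L) : forall n (e1 e2 : nat -> N),
  formula_wf n phi -> (forall i, (i < n)%nat -> e1 i = e2 i) -> eval N phi e1 = eval N phi e2.
Proof.
  induction phi as [| t1 t2 | r args | phi IH1 psi IH2 | c phi IH | phi IH | phi IH];
    intros n e1 e2 Hw Ha; simpl in *; auto.
  - destruct Hw. erewrite (teval_agree N t1 n e1 e2), (teval_agree N t2 n e1 e2); eauto.
  - f_equal. apply functional_extensionality; intro j. eapply teval_agree; eauto.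
  - destruct Hw. erewrite IH1, IH2; eauto.
  - erewrite IH; eauto.
  - assert (E : forall x, eval N phi (scons x e1) = eval N phi (scons x e2)).
    { intros x. eapply IH; eauto. intros [|i] Hi; simpl; auto. apply Ha. lia. }
    f_equal. f_equal. apply functional_extensionality; intro v.
    apply propositional_extensionality; split; intros [x Hx]; exists x; rewrite Hx; auto.
  - assert (E : forall x, eval N phi (scons x e1) = eval N phi (scons x e2)).
    { intros x. eapply IH; eauto. intros [|i] Hi; simpl; auto. apply Ha. lia. }
    f_equal. f_equal. apply functional_extensionality; intro v.
    apply propositional_extensionality; split; intros [x Hx]; exists x; rewrite Hx; auto.
Qed.

Lemma transfer {L} (T : Theory L) (M : Structure L) n (phi : formula L) :
  complete_theory T -> models M T -> formula_wf n phi ->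
  (forall e, 0 <= eval M phi e) -> entails_nonneg T phi.
Proof.
  intros [_ Hc] HM Hw Hpos N HN b.
  assert (Hw0 : formula_wf 0 (iinf n phi)) by (apply iinf_wf; rewrite Nat.add_0_r; auto).
  apply (iinf_pos_inv N n). intros e.
  rewrite <- (Hc _ Hw0 M N (fun _ => point M) e HM HN).
  apply iinf_pos; auto.
Qed.

Lemma nat_unbounded (x : R) : exists K : nat, x < INR K.
Proof.
  destruct (archimed x) as [H1 _].
  exists (Z.to_nat (up x)). rewrite INR_IZR_INZ.
  destruct (Z_le_gt_dec 0 (up x)) as [Hz|Hz].
  - rewrite Z2Nat.id; auto; lra.
  - replace (Z.to_nat (up x)) with 0%nat by (destruct (up x); simpl; auto; lia). simpl.
    assert (IZR (up x) < 0) by (apply IZR_lt; lia). lra.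
Qed.

Lemma INR_le_pow2 (K : nat) : INR K <= 2 ^ K.
Proof.
  induction K; [simpl; lra|].
  rewrite S_INR. change (2 ^ S K) with (2 * 2 ^ K). pose proof (pow_R1_Rle 2 K). lra.
Qed.


Section Main.
Variables (L : Language) (T : Theory L) (M : Structure L) (n : nat) (p : formula L -> R).
Hypothesis Hc : complete_theory T.
Hypothesis HM : models M T.
Hypothesis Hp : extreme_type T n p.

Definition wf := formula_wf (L:=L) n.

Lemma p_add phi psi : wf phi -> wf psi -> p (F_add phi psi) = p phi + p psi.
Proof. intros; apply (type_add (proj1 Hp)); auto. Qed.
Lemma p_scale c phi : wf phi -> p (F_scale c phi) = c * p phi.
Proof. intros; apply (type_scale (proj1 Hp)); auto. Qed.
Lemma p_one : p F_one = 1.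
Proof. apply (type_one (proj1 Hp)). Qed.

Definition dom (A : (nat -> M) -> Prop) : Prop :=
  forall phi c, wf phi -> (forall e, A e -> eval M phi e <= c) -> p phi <= c.

Lemma dom_mono (A B : (nat -> M) -> Prop) : (forall e, A e -> B e) -> dom A -> dom B.
Proof. intros AB HA phi c Hw H. apply HA; auto. Qed.

Lemma dom_all : dom (fun _ => True).
Proof.
  intros phi c Hw H.
  set (psi := F_add (F_scale c F_one) (F_scale (-1) phi)).
  assert (Hpsi : wf psi) by (unfold psi, wf; simpl; auto).
  assert (Hpos : 0 <= p psi).
  { apply (type_pos (proj1 Hp)); auto. apply (transfer T M n); auto.
    intros e; unfold psi; simpl. specialize (H e I). lra. }
  unfold psi in Hpos. rewrite p_add, !p_scale, p_one in Hpos; unfold wf; simpl; auto. lra.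
Qed.

Lemma p_ext phi psi : wf phi -> wf psi -> (forall e, eval M phi e = eval M psi e) -> p phi = p psi.
Proof.
  intros H1 H2 E.
  assert (A1 : p (F_add phi (F_scale (-1) psi)) <= 0).
  { apply dom_all; [unfold wf; simpl; auto|]. intros e _; simpl; rewrite E; lra. }
  assert (A2 : p (F_add psi (F_scale (-1) phi)) <= 0).
  { apply dom_all; [unfold wf; simpl; auto|]. intros e _; simpl; rewrite E; lra. }
  rewrite p_add, p_scale in A1, A2; auto. lra.
Qed.

Definition supP (P : (nat -> M) -> Prop) (g : (nat -> M) -> R) : R :=
  real (Lub_Rbar (fun r => exists e, P e /\ r = g e)).

Lemma supP_char (P : (nat -> M) -> Prop) (g : (nat -> M) -> R) :
  (exists e, P e) -> (exists B, forall e, g e <= B) ->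
  (forall e, P e -> g e <= supP P g) /\ (forall c, (forall e, P e -> g e <= c) -> supP P g <= c).
Proof.
  intros [e0 P0] [B HB].
  destruct (lub_char (fun r => exists e, P e /\ r = g e) B (g e0)) as [U1 U2].
  - intros v [e [_ ->]]; auto.
  - exists e0; auto.
  - split.
    + intros e Pe. apply U1. exists e; auto.
    + intros c Hc'. apply U2. intros v [e [Pe ->]]; auto.
Qed.

Lemma eval_ub phi : exists B, forall e, eval M phi e <= B.
Proof.
  destruct (eval_bound M phi) as [B H]. exists B; intros e. specialize (H e).
  apply Rabs_le_between in H; lra.
Qed.

Definition zf : formula L := F_scale 0 F_one.
Lemma wf_zf : wf zf.
Proof. unfold wf, zf; simpl; auto. Qed.
Lemma wf_one : wf F_one.
Proof. unfold wf; simpl; auto. Qed.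

Section Split.
Variables (A B : (nat -> M) -> Prop).
Hypothesis HAB : dom (fun e => A e \/ B e).
Hypothesis a0 : exists e, A e.
Hypothesis b0 : exists e, B e.

Definition Y := (bool * (nat -> M))%type.
Definition Ev (phi psi : formula L) : Y -> R :=
  fun y => if fst y then eval M phi (snd y) else eval M psi (snd y).
Definition Wp (v : Y -> R) : Prop := exists phi psi, wf phi /\ wf psi /\ v = Ev phi psi.
Definition Dp (v : Y -> R) : Prop := exists phi, wf phi /\ v = Ev phi phi.
Definition supA (phi : formula L) := supP A (eval M phi).
Definition supB (phi : formula L) := supP B (eval M phi).
Definition Sf (v : Y -> R) : R :=
  Rmax (supP A (fun e => v (true, e))) (supP B (fun e => v (false, e))).
Definition ff (v : Y -> R) : R :=
  match excluded_middle_informative (exists phi, wf phi /\ v = Ev phi phi) with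
  | left H => p (proj1_sig (constructive_indefinite_description _ H))
  | right _ => 0 end.

Lemma Ev_add phi psi phi' psi' : vadd (Ev phi psi) (Ev phi' psi') = Ev (F_add phi phi') (F_add psi psi').
Proof. apply functional_extensionality; intros [[|] e]; reflexivity. Qed.
Lemma Ev_sc a phi psi : vsc a (Ev phi psi) = Ev (F_scale a phi) (F_scale a psi).
Proof. apply functional_extensionality; intros [[|] e]; reflexivity. Qed.
Lemma Ev_z : vz = Ev zf zf.
Proof. apply functional_extensionality; intros [[|] e]; unfold vz, Ev, zf; simpl; ring. Qed.

Lemma ff_rep phi : wf phi -> ff (Ev phi phi) = p phi.
Proof.
  intros Hw. unfold ff. destruct (excluded_middle_informative _) as [H|H].
  - destruct (constructive_indefinite_description _ H) as [psi [Hpsi E]]; simpl.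
    apply p_ext; auto. intros e. apply (f_equal (fun F => F (true, e))) in E. simpl in E; auto.
  - exfalso; apply H; exists phi; auto.
Qed.

Lemma Wp_bound v : Wp v -> forall b, exists Bd, forall e, v (b, e) <= Bd.
Proof.
  intros [phi [psi [_ [_ ->]]]] [|]; simpl; apply eval_ub.
Qed.

Lemma supAB_char (b : bool) (v : Y -> R) : Wp v ->
  let P := if b then A else B in
  (forall e, P e -> v (b, e) <= supP P (fun e => v (b, e))) /\
  (forall c, (forall e, P e -> v (b, e) <= c) -> supP P (fun e => v (b, e)) <= c).
Proof.
  intros Hv P. apply supP_char.
  - unfold P; destruct b; auto.
  - apply Wp_bound; auto.
Qed.

Lemma sup_add (b : bool) u v : Wp u -> Wp v ->
  let P := if b then A else B in
  supP P (fun e => vadd u v (b, e)) <= supP P (fun e => u (b, e)) + supP P (fun e => v (b, e)).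
Proof.
  intros Hu Hv P.
  assert (Huv : Wp (vadd u v)).
  { destruct Hu as [a1 [a2 [w1 [w2 ->]]]], Hv as [c1 [c2 [w3 [w4 ->]]]].
    rewrite Ev_add. exists (F_add a1 c1), (F_add a2 c2); unfold wf in *; simpl; auto. }
  destruct (supAB_char b _ Hu) as [U1 _], (supAB_char b _ Hv) as [V1 _], (supAB_char b _ Huv) as [_ W2].
  apply W2. intros e Pe. unfold vadd. specialize (U1 e Pe); specialize (V1 e Pe). unfold P. lra.
Qed.

Lemma sup_sc (b : bool) a u : Wp u -> 0 < a ->
  let P := if b then A else B in
  supP P (fun e => vsc a u (b, e)) = a * supP P (fun e => u (b, e)).
Proof.
  intros Hu Ha P.
  assert (Hau : Wp (vsc a u)).
  { destruct Hu as [a1 [a2 [w1 [w2 ->]]]].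
    rewrite Ev_sc. exists (F_scale a a1), (F_scale a a2); unfold wf in *; simpl; auto. }
  destruct (supAB_char b _ Hu) as [U1 U2], (supAB_char b _ Hau) as [V1 V2].
  apply Rle_antisym.
  - apply V2. intros e Pe. unfold vsc. apply Rmult_le_compat_l; [lra|]. apply U1; auto.
  - assert (supP P (fun e => u (b, e)) <= / a * supP P (fun e => vsc a u (b, e))).
    { apply U2. intros e Pe. specialize (V1 e Pe). unfold vsc in *.
      replace (u (b, e)) with (/ a * (a * u (b, e))) by (field; lra).
      apply Rmult_le_compat_l; auto. left; apply Rinv_0_lt_compat; auto. }
    apply Rmult_le_compat_l with (r := a) in H; [|lra].
    rewrite <- Rmult_assoc, Rinv_r, Rmult_1_l in H; lra.
Qed.

Lemma sup_const (b : bool) c :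
  let P := if b then A else B in
  supP P (fun e => Ev (F_scale c F_one) (F_scale c F_one) (b, e)) = c.
Proof.
  intros P.
  assert (Hw : Wp (Ev (F_scale c F_one) (F_scale c F_one))).
  { exists (F_scale c F_one), (F_scale c F_one); unfold wf; simpl; auto. }
  destruct (supAB_char b _ Hw) as [U1 U2].
  assert (Hv : forall e, Ev (F_scale c F_one) (F_scale c F_one) (b, e) = c).
  { intros e; unfold Ev; destruct b; simpl; ring. }
  apply Rle_antisym.
  - apply U2; intros e _; rewrite Hv; lra.
  - assert (exists e, P e) as [e Pe] by (unfold P; destruct b; auto).
    specialize (U1 e Pe). rewrite Hv in U1; auto.
Qed.

Lemma Rmax_add_le a b c d : Rmax (a + b) (c + d) <= Rmax a c + Rmax b d.
Proof. unfold Rmax; repeat destruct Rle_dec; lra. Qed.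

Lemma hb_exists : exists g : (Y -> R) -> R,
  (forall u v, Wp u -> Wp v -> g (vadd u v) = g u + g v) /\
  (forall a u, Wp u -> g (vsc a u) = a * g u) /\
  (forall u, Dp u -> g u = ff u) /\ (forall u, Wp u -> g u <= Sf u).
Proof.
  apply hahn_banach.
  - intros u v [a1 [a2 [w1 [w2 ->]]]] [c1 [c2 [w3 [w4 ->]]]].
    rewrite Ev_add. exists (F_add a1 c1), (F_add a2 c2); unfold wf in *; simpl; auto.
  - intros a u [a1 [a2 [w1 [w2 ->]]]].
    rewrite Ev_sc. exists (F_scale a a1), (F_scale a a2); unfold wf in *; simpl; auto.
  - intros u v [a1 [w1 ->]] [c1 [w3 ->]].
    rewrite Ev_add. exists (F_add a1 c1); unfold wf in *; simpl; auto.
  - intros a u [a1 [w1 ->]].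
    rewrite Ev_sc. exists (F_scale a a1); unfold wf in *; simpl; auto.
  - intros u [a1 [w1 ->]]. exists a1, a1; auto.
  - exists zf. split; [apply wf_zf| apply Ev_z].
  - intros u v Hu Hv. unfold Sf.
    pose proof (sup_add true u v Hu Hv). pose proof (sup_add false u v Hu Hv). simpl in *.
    unfold Rmax; repeat destruct Rle_dec; lra.
  - intros a u Hu Ha. unfold Sf.
    pose proof (sup_sc true a u Hu Ha). pose proof (sup_sc false a u Hu Ha). simpl in *.
    rewrite H, H0. apply RmaxRmult; lra.
  - intros u v [a1 [w1 ->]] [c1 [w3 ->]].
    rewrite Ev_add, !ff_rep; unfold wf in *; simpl; auto. apply p_add; auto.
  - intros a u [a1 [w1 ->]].
    rewrite Ev_sc, !ff_rep; unfold wf in *; simpl; auto. apply p_scale; auto.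
  - intros u [a1 [w1 ->]]. rewrite ff_rep; auto.
    assert (Hw : Wp (Ev a1 a1)) by (exists a1, a1; auto).
    destruct (supAB_char true _ Hw) as [U1 _], (supAB_char false _ Hw) as [V1 _].
    simpl in *. unfold Sf. apply HAB; auto.
    intros e [Ae|Be].
    + eapply Rle_trans; [apply U1; auto| apply Rmax_l].
    + eapply Rle_trans; [apply V1; auto| apply Rmax_r].
Qed.

Lemma split_dom : dom A \/ dom B.
Proof.
  destruct hb_exists as [g [gadd [gsc [gD gS]]]].
  set (f1 := fun phi => g (Ev phi zf)).
  set (f2 := fun psi => g (Ev zf psi)).
  set (lam := f1 F_one).
  assert (W1 : forall phi, wf phi -> Wp (Ev phi zf)) by (intros phi H; exists phi, zf; split; auto; split; auto; apply wf_zf).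
  assert (W2 : forall phi, wf phi -> Wp (Ev zf phi)) by (intros phi H; exists zf, phi; split; auto; apply wf_zf).
  assert (pdec : forall phi, wf phi -> p phi = f1 phi + f2 phi).
  { intros phi Hw. unfold f1, f2. rewrite <- gadd; auto.
    replace (vadd (Ev phi zf) (Ev zf phi)) with (Ev phi phi).
    - rewrite gD, ff_rep; auto. exists phi; auto.
    - apply functional_extensionality; intros [[|] e]; unfold vadd, Ev, zf; simpl; ring. }
  assert (f1add : forall phi psi, wf phi -> wf psi -> f1 (F_add phi psi) = f1 phi + f1 psi).
  { intros phi psi H1 H2. unfold f1. rewrite <- gadd; auto. f_equal.
    apply functional_extensionality; intros [[|] e]; unfold vadd, Ev, zf; simpl; ring. }
  assert (f2add : forall phi psi, wf phi -> wf psi -> f2 (F_add phi psi) = f2 phi + f2 psi).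
  { intros phi psi H1 H2. unfold f2. rewrite <- gadd; auto. f_equal.
    apply functional_extensionality; intros [[|] e]; unfold vadd, Ev, zf; simpl; ring. }
  assert (f1sc : forall a phi, wf phi -> f1 (F_scale a phi) = a * f1 phi).
  { intros a phi H1. unfold f1. rewrite <- gsc; auto. f_equal.
    apply functional_extensionality; intros [[|] e]; unfold vsc, Ev, zf; simpl; ring. }
  assert (f2sc : forall a phi, wf phi -> f2 (F_scale a phi) = a * f2 phi).
  { intros a phi H1. unfold f2. rewrite <- gsc; auto. f_equal.
    apply functional_extensionality; intros [[|] e]; unfold vsc, Ev, zf; simpl; ring. }
  assert (f1ext : forall phi psi, (forall e, eval M phi e = eval M psi e) -> f1 phi = f1 psi).
  { intros phi psi E. unfold f1. f_equal. apply functional_extensionality; intros [[|] e]; unfold Ev; simpl; auto. }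
  assert (f2ext : forall phi psi, (forall e, eval M phi e = eval M psi e) -> f2 phi = f2 psi).
  { intros phi psi E. unfold f2. f_equal. apply functional_extensionality; intros [[|] e]; unfold Ev; simpl; auto. }
  assert (sum1 : lam + f2 F_one = 1).
  { rewrite <- p_one. rewrite pdec; auto. apply wf_one. }
  assert (F3 : forall phi c, wf phi -> f1 phi + c * f2 F_one <= Rmax (supA phi) c).
  { intros phi c Hw.
    replace (f1 phi + c * f2 F_one) with (g (Ev phi (F_scale c F_one))).
    - eapply Rle_trans; [apply gS; exists phi, (F_scale c F_one); unfold wf; simpl; auto|].
      unfold Sf. pose proof (sup_const false c) as Hk. simpl in Hk.
      replace (supP B (fun e => Ev phi (F_scale c F_one) (false, e))) with c.
      unfold supA. right; reflexivity.
    - unfold f1, f2. rewrite <- gsc by (apply W2, wf_one).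
      rewrite <- gadd by (first [apply W1; auto | rewrite Ev_sc; exists (F_scale c zf), (F_scale c F_one); unfold wf, zf; simpl; auto]).
      f_equal. apply functional_extensionality; intros [[|] e]; unfold vadd, vsc, Ev, zf; simpl; ring. }
  assert (F4 : forall psi c, wf psi -> c * lam + f2 psi <= Rmax c (supB psi)).
  { intros psi c Hw.
    replace (c * lam + f2 psi) with (g (Ev (F_scale c F_one) psi)).
    - eapply Rle_trans; [apply gS; exists (F_scale c F_one), psi; unfold wf; simpl; auto|].
      unfold Sf. pose proof (sup_const true c) as Hk. simpl in Hk.
      replace (supP A (fun e => Ev (F_scale c F_one) psi (true, e))) with c.
      unfold supB. right; reflexivity.
    - unfold lam, f1, f2. rewrite <- gsc by (apply W1, wf_one).
      rewrite <- gadd by (first [apply W2; auto | rewrite Ev_sc; exists (F_scale c F_one), (F_scale c zf); unfold wf, zf; simpl; auto]).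
      f_equal. apply functional_extensionality; intros [[|] e]; unfold vadd, vsc, Ev, zf; simpl; ring. }
  assert (f2z : f2 zf = 0) by (unfold zf; rewrite f2sc; [ring| apply wf_one]).
  assert (supBz : supB zf = 0).
  { unfold supB. pose proof (sup_const false 0) as Hk; simpl in Hk. exact Hk. }
  assert (lam_le1 : lam <= 1).
  { pose proof (F4 zf 1 wf_zf). rewrite f2z, supBz in H. unfold Rmax in H; destruct Rle_dec; lra. }
  assert (lam_ge0 : 0 <= lam).
  { pose proof (F4 zf (-1) wf_zf). rewrite f2z, supBz in H. unfold Rmax in H; destruct Rle_dec; lra. }
  assert (G1 : forall phi, wf phi -> f1 phi <= lam * supA phi).
  { intros phi Hw. pose proof (F3 phi (supA phi) Hw). rewrite Rmax_left in H by lra.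
    replace (f2 F_one) with (1 - lam) in H by lra. nra. }
  assert (G2 : forall psi, wf psi -> f2 psi <= (1 - lam) * supB psi).
  { intros psi Hw. pose proof (F4 psi (supB psi) Hw). rewrite Rmax_left in H by lra. nra. }
  assert (supA_le : forall phi c, wf phi -> (forall e, A e -> eval M phi e <= c) -> supA phi <= c).
  { intros phi c Hw H. unfold supA. destruct (supP_char A (eval M phi) a0 (eval_ub phi)) as [_ U2]; auto. }
  assert (supB_le : forall phi c, wf phi -> (forall e, B e -> eval M phi e <= c) -> supB phi <= c).
  { intros phi c Hw H. unfold supB. destruct (supP_char B (eval M phi) b0 (eval_ub phi)) as [_ U2]; auto. }
  assert (wfN : forall phi, wf phi -> wf (F_scale (-1) phi)) by (unfold wf; simpl; auto).
  destruct (Req_dec lam 0) as [L0|L0].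
  -
    right. intros phi c Hw H.
    assert (f1 phi = 0).
    { pose proof (G1 phi Hw). pose proof (G1 _ (wfN phi Hw)). rewrite f1sc in H1; auto.
      rewrite L0 in *. lra. }
    rewrite pdec; auto. pose proof (G2 phi Hw). rewrite L0 in H1.
    pose proof (supB_le phi c Hw H). lra.
  - left.
    assert (key : forall phi, wf phi -> p phi = f1 phi / lam).
    { destruct (Req_dec lam 1) as [L1|L1].
      - intros phi Hw. assert (f2 phi = 0).
        { pose proof (G2 phi Hw). pose proof (G2 _ (wfN phi Hw)). rewrite f2sc in H0; auto.
          rewrite L1 in *. lra. }
        rewrite pdec; auto. rewrite L1. field_simplify; lra.
      - set (q1 := fun phi => f1 phi / lam).
        set (q2 := fun phi => f2 phi / (1 - lam)).
        assert (ent : forall phi, entails_nonneg T phi -> forall e, 0 <= eval M phi e).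
        { intros phi H e; apply H; auto. }
        assert (Tq1 : is_type T n q1).
        { constructor; unfold q1.
          - intros phi psi H1 H2 HE. rewrite (f1ext phi psi); [reflexivity|]. intros e; apply HE; auto.
          - intros phi psi H1 H2. rewrite f1add; auto. field; auto.
          - intros c phi H1. rewrite f1sc; auto. field; auto.
          - intros phi H1 H2. pose proof (G1 _ (wfN phi H1)). rewrite f1sc in H; auto.
            assert (supA (F_scale (-1) phi) <= 0).
            { apply supA_le; auto. intros e _. simpl. pose proof (ent phi H2 e). lra. }
            apply Rmult_le_pos; [| left; apply Rinv_0_lt_compat; lra]. nra.
          - change (f1 F_one) with lam; field; auto. }
        assert (Tq2 : is_type T n q2).
        { constructor; unfold q2.
          - intros phi psi H1 H2 HE. rewrite (f2ext phi psi); [reflexivity|]. intros e; apply HE; auto.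
          - intros phi psi H1 H2. rewrite f2add; auto. field; lra.
          - intros c phi H1. rewrite f2sc; auto. field; lra.
          - intros phi H1 H2. pose proof (G2 _ (wfN phi H1)). rewrite f2sc in H; auto.
            assert (supB (F_scale (-1) phi) <= 0).
            { apply supB_le; auto. intros e _. simpl. pose proof (ent phi H2 e). lra. }
            apply Rmult_le_pos; [| left; apply Rinv_0_lt_compat; lra]. nra.
          - replace (f2 F_one) with (1 - lam) by lra. field; lra. }
        assert (Heq : type_eq n q1 q2).
        { apply (proj2 Hp) with lam; auto; [lra|].
          intros phi Hw. unfold q1, q2. rewrite pdec; auto. field; lra. }
        intros phi Hw. rewrite pdec; auto.
        pose proof (Heq phi Hw). unfold q1, q2 in H.
        assert (f2 phi = (1 - lam) * (f1 phi / lam)) by (rewrite H; field; lra).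
        rewrite H0. field; auto. }
    intros phi c Hw H. rewrite key; auto.
    pose proof (G1 phi Hw). pose proof (supA_le phi c Hw H).
    apply Rmult_le_reg_l with lam; [lra|]. field_simplify; [|auto]. nra.
Qed.
End Split.

Lemma split_dom' (A B : (nat -> M) -> Prop) : dom (fun e => A e \/ B e) -> dom A \/ dom B.
Proof.
  intros H. destruct (classic (exists e, A e)) as [Ha|Ha].
  - destruct (classic (exists e, B e)) as [Hb|Hb].
    + apply split_dom; auto.
    + left. apply (dom_mono _ _ (fun e H' => match H' with or_introl x => x | or_intror y => False_ind _ (Hb (ex_intro _ e y)) end) H).
  - right. apply (dom_mono _ _ (fun e H' => match H' with or_introl x => False_ind _ (Ha (ex_intro _ e x)) | or_intror y => y end) H).
Qed.

Lemma dom_nonempty (A : (nat -> M) -> Prop) : dom A -> exists e, A e.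
Proof.
  intros H. apply NNPP; intro Hn.
  assert (p F_one <= 0).
  { apply H; [apply wf_one|]. intros e Ae; exfalso; apply Hn; eauto. }
  rewrite p_one in H0; lra.
Qed.

Lemma refine (phi : formula L) (A : (nat -> M) -> Prop) (delta : R) :
  wf phi -> dom A -> 0 < delta ->
  exists A', (forall e, A' e -> A e) /\ dom A' /\
    exists m, forall e, A' e -> m <= eval M phi e <= m + delta.
Proof.
  intros Hw HA Hd.
  destruct (eval_bound M phi) as [B0 HB0]. set (B := Rabs B0 + 1).
  assert (HB : forall e, - B <= eval M phi e <= B).
  { intros e; specialize (HB0 e). apply Rabs_le_between in HB0. pose proof (Rle_abs B0). unfold B; lra. }
  assert (Bpos : 0 < B) by (unfold B; pose proof (Rabs_pos B0); lra).
  assert (step : forall K : nat, exists A', (forall e, A' e -> A e) /\ dom A' /\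
    exists m, forall e, A' e -> m <= eval M phi e <= m + 2 * B / 2 ^ K).
  { induction K as [|K IH].
    - exists A; split; auto; split; auto. exists (- B). intros e _. specialize (HB e). simpl.
      replace (2 * B / 1) with (2 * B) by field. lra.
    - destruct IH as [A' [sub [dA' [m Hm]]]].
      set (w := 2 * B / 2 ^ K).
      assert (wpos : 0 < w) by (unfold w; apply Rdiv_lt_0_compat; [lra| apply pow_lt; lra]).
      assert (wS : 2 * B / 2 ^ S K = w / 2) by (unfold w; simpl; field; apply pow_nonzero; lra).
      set (mid := m + w / 2).
      set (A1 := fun e => A' e /\ eval M phi e <= mid).
      set (A2 := fun e => A' e /\ mid <= eval M phi e).
      assert (dU : dom (fun e => A1 e \/ A2 e)).
      { apply (dom_mono A'); auto. intros e Ae. unfold A1, A2.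
        destruct (Rle_dec (eval M phi e) mid); [left|right]; split; auto; lra. }
      destruct (split_dom' A1 A2 dU) as [d1|d2].
      + exists A1; split; [intros e [H _]; auto|]. split; auto. exists m.
        intros e [Ae Hle]. rewrite wS. specialize (Hm e Ae). unfold mid in Hle. fold w in Hm. lra.
      + exists A2; split; [intros e [H _]; auto|]. split; auto. exists mid.
        intros e [Ae Hle]. rewrite wS. specialize (Hm e Ae). unfold mid in *. fold w in Hm. lra. }
  destruct (nat_unbounded (2 * B / delta)) as [K HK].
  destruct (step K) as [A' [sub [dA' [m Hm]]]].
  exists A'; split; auto; split; auto. exists m. intros e Ae. specialize (Hm e Ae).
  assert (2 * B / 2 ^ K <= delta).
  { pose proof (INR_le_pow2 K). assert (0 < 2 ^ K) by (apply pow_lt; lra).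
    apply Rmult_le_reg_r with (2 ^ K); auto. unfold Rdiv. rewrite Rmult_assoc, Rinv_l by lra.
    assert (2 * B < delta * 2 ^ K).
    { apply Rmult_lt_compat_r with (r := delta) in HK; auto. unfold Rdiv in HK.
      rewrite Rmult_assoc, Rinv_l, Rmult_1_r in HK by lra. nra. }
    lra. }
  lra.
Qed.

Lemma refine_list (phis : list (formula L)) (delta : R) : 0 < delta ->
  List.Forall wf phis -> exists A, dom A /\
    List.Forall (fun phi => exists m, forall e, A e -> m <= eval M phi e <= m + delta) phis.
Proof.
  intros Hd. induction phis as [|phi rest IH]; intros Hf.
  - exists (fun _ => True); split; [apply dom_all| constructor].
  - inversion Hf; subst. destruct (IH H2) as [A [dA FA]].
    destruct (refine phi A delta H1 dA Hd) as [A' [sub [dA' [m Hm]]]].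
    exists A'; split; auto. constructor.
    + exists m; auto.
    + eapply List.Forall_impl; [|exact FA]. intros psi [m' Hm']. exists m'; auto.
Qed.

Lemma final : limit_of_realized_types M n p.
Proof.
  intros phis eps Heps Hf.
  assert (Hd : 0 < eps / 2) by lra.
  destruct (refine_list phis (eps / 2) Hd Hf) as [A [dA FA]].
  destruct (dom_nonempty A dA) as [e0 Ae0].
  exists (fun i : Fin.t n => e0 (proj1_sig (Fin.to_nat i))).
  assert (agree : forall i, (i < n)%nat -> tuple_env M (fun i : Fin.t n => e0 (proj1_sig (Fin.to_nat i))) i = e0 i).
  { intros i Hi. unfold tuple_env. destruct (Compare_dec.lt_dec i n) as [h|h]; [|contradiction].
    rewrite Fin.to_nat_of_nat. reflexivity. }
  apply List.Forall_forall. intros phi Hin.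
  pose proof (proj1 (List.Forall_forall _ _) FA phi Hin) as [m Hm].
  pose proof (proj1 (List.Forall_forall _ _) Hf phi Hin) as Hw.
  unfold tp. rewrite (eval_agree M phi n _ e0 Hw agree).
  pose proof (Hm e0 Ae0) as Hm0.
  assert (U : p phi <= m + eps / 2).
  { apply dA; auto. intros e Ae; apply (Hm e Ae). }
  assert (Lw : p (F_scale (-1) phi) <= - m).
  { apply dA; [unfold wf; simpl; auto|]. intros e Ae; simpl. pose proof (Hm e Ae). lra. }
  rewrite p_scale in Lw; auto.
  apply Rabs_def1; lra.
Qed.

End Main.

Theorem mainTheorem17 (L : Language) (T : Theory L) (M : Structure L)
  (n : nat) (p : formula L -> R) :
  complete_theory T -> models M T -> extreme_type T n p ->
  limit_of_realized_types M n p.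
Proof. intros Hc HM Hp. eapply final; eauto. Qed.
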